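(* Let $\{W_n\}_{n\ge0}$ be an Appell monic polynomial sequence with cubic decomposition $W_{3n}(x)=P_n(x^3)+xa^1_{n-1}(x^3)+x^2a^2_{n-1}(x^3)$, $W_{3n+1}(x)=b^1_n(x^3)+xQ_n(x^3)+x^2b^2_{n-1}(x^3)$, $W_{3n+2}(x)=c^1_n(x^3)+xc^2_n(x^3)+x^2R_n(x^3)$ (components as in the context). (1) Either the three sequences $\{a^1_n\}_{n\ge0}$, $\{c^1_n\}_{n\ge0}$, $\{b^2_n\}_{n\ge0}$ are all identically the null sequence, or they are all non-null, and in this case there are a non-negative integer $\kappa$ and numerical sequences $\mu_{1,n},\mu_{2,n},\mu_{3,n}$ such that for $n\ge0$ $$b^2_{n+\kappa}(x)=\mu_{1,n}\hat b^2_n(x),\quad a^1_{n+\kappa}(x)=\mu_{2,n}\hat a^1_n(x),\quad c^1_{n+\kappa}(x)=\mu_{3,n}\hat c^1_n(x),$$ where $\{\hat a^1_n\},\{\hat c^1_n\},\{\hat b^2_n\}$ are monic polynomial sequences. (2) Either the three sequences $\{a^2_n\}_{n\ge0}$, $\{c^2_n\}_{n\ge0}$, $\{b^1_n\}_{n\ge0}$ are all identically null, or they are all non-null, and in this case there are a non-negative integer $\tau$ and numerical sequences $\alpha_{1,n},\alpha_{2,n},\alpha_{3,n}$ such that for $n\ge0$ $$a^2_{n+\tau}(x)=\alpha_{1,n}\hat a^2_n(x),\quad c^2_{n+\tau}(x)=\alpha_{2,n}\hat c^2_n(x),\quad b^1_{n+\tau}(x)=\alpha_{3,n}\hat b^1_n(x),$$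 where $\{\hat a^2_n\},\{\hat c^2_n\},\{\hat b^1_n\}$ are monic polynomial sequences. (3) Furthermore, there are two nonzero constants $b^2_\kappa$ and $a^2_\tau$ such that $\mu_{1,n}=\frac{(\kappa+\frac73)_n(\kappa+\frac53)_n}{(\frac43)_n(\frac53)_n}\binom{n+\kappa+1}{n}b^2_\kappa$ for $n\ge0$; $\mu_{2,n}=\frac{(\kappa+\frac73)_{n-1}(\kappa+\frac53)_n}{(\frac43)_n(\frac53)_{n-1}}\binom{n+\kappa+1}{n}b^2_\kappa$ for $n\ge1$; $\mu_{3,n}=\frac{(\kappa+\frac73)_{n-1}(\kappa+\frac53)_n}{(\frac43)_{n-1}(\frac53)_{n-1}}\binom{n+\kappa}{n}\frac{b^2_\kappa}{\kappa+1}$ for $n\ge1$; $\alpha_{1,n}=\frac{(\tau+\frac53)_n(\tau+\frac43)_n}{(\frac43)_n(\frac53)_n}\binom{n+\tau+1}{n}a^2_\tau$ for $n\ge0$; $\alpha_{2,n}=\frac{(\tau+\frac53)_n(\tau+\frac43)_n}{(\frac43)_n(\frac53)_{n-1}}\binom{n+\tau}{n}\frac{a^2_\tau}{\tau+1}$ for $n\ge1$; $\alpha_{3,n}=\frac{(\tau+\frac53)_{n-1}(\tau+\frac43)_n}{(\frac43)_{n-1}(\frac53)_{n-1}}\binom{n+\tau}{n}\frac{a^2_\tau}{\tau+1}$ for $n\ge1$; with $\mu_{2,0}=\frac{2b^2_\kappa}{3(\kappa+\frac43)}$, $\mu_{3,0}=\frac{2b^2_\kappa}{9(\kappa+1)(\kappa+\frac43)}$,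 $\alpha_{2,0}=\frac{2a^2_\tau}{3(\tau+1)}$, $\alpha_{3,0}=\frac{2a^2_\tau}{9(\tau+1)(\tau+\frac23)}$.
   Context: An MPS is a sequence $\{W_n\}_{n\ge0}$ of complex polynomials with $W_n$ monic of degree $n$; it is Appell if $W_{n+1}'=(n+1)W_n$ for $n\ge0$. Cubic decomposition: for any MPS there are unique polynomials with the displayed identities for all $n\ge0$, where $\{P_n\},\{Q_n\},\{R_n\}$ are MPSs and $\deg a^1_{n-1},\deg a^2_{n-1},\deg b^2_{n-1}\le n-1$, $\deg b^1_n,\deg c^1_n,\deg c^2_n\le n$, with $a^1_{-1}=a^2_{-1}=b^2_{-1}=0$. $(a)_n$ denotes the Pochhammer symbol $(a)_n=a(a+1)\cdots(a+n-1)$ for $n\ge1$, $(a)_0=1$. *)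

(* Defs.v *)
(* Complex polynomials: stated over an arbitrary
   numClosedFieldType C (covers the complex numbers). *)
From HB Require Import structures.
From mathcomp Require Import all_boot all_order all_algebra.
Set Implicit Arguments. Unset Strict Implicit. Unset Printing Implicit Defensive.
Import Order.TTheory GRing.Theory Num.Theory.
Local Open Scope ring_scope.

Definition MPS (C : numClosedFieldType) (W : nat -> {poly C}) : Prop :=
  forall n, W n \is monic /\ size (W n) = n.+1.

Definition Appell (C : numClosedFieldType) (W : nat -> {poly C}) : Prop :=
  MPS W /\ forall n, (W n.+1)^`() = (n.+1)%:R *: W n.

Definition prevp (C : numClosedFieldType) (s : nat -> {poly C}) (n : nat) : {poly C} :=
  if n is m.+1 then s m else 0.

Definition cubic_decomposition (C : numClosedFieldType)
  (W P Q R a1 a2 b1 b2 c1 c2 : nat -> {poly C}) : Prop :=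
  MPS P /\ MPS Q /\ MPS R /\
      (forall n, (size (a1 n) <= n.+1)%N /\ (size (a2 n) <= n.+1)%N /\ (size (b2 n) <= n.+1)%N) /\
      (forall n, (size (b1 n) <= n.+1)%N /\ (size (c1 n) <= n.+1)%N /\ (size (c2 n) <= n.+1)%N) /\
      (forall n, W (3 * n)%N = P n \Po 'X^3 + 'X * (prevp a1 n \Po 'X^3)
                               + 'X^2 * (prevp a2 n \Po 'X^3)) /\
      (forall n, W (3 * n + 1)%N = b1 n \Po 'X^3 + 'X * (Q n \Po 'X^3)
                               + 'X^2 * (prevp b2 n \Po 'X^3)) /\
      (forall n, W (3 * n + 2)%N = c1 n \Po 'X^3 + 'X * (c2 n \Po 'X^3)
                               + 'X^2 * (R n \Po 'X^3)).

Definition poch (C : numClosedFieldType) (a : C) (n : nat) : C :=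
  \prod_(i < n) (a + i%:R).

(* Main.v *)
Require Import Defs.
From HB Require Import structures.
From mathcomp Require Import all_boot all_order all_algebra.
From mathcomp Require Import ring zify.
From Stdlib Require Import Classical_Prop.
Import Order.TTheory GRing.Theory Num.Theory.
Local Open Scope ring_scope.


Lemma dec_coef (R : nzRingType) (p q r : {poly R}) (i : nat) :
  let D := p \Po 'X^3 + 'X * (q \Po 'X^3) + 'X^2 * (r \Po 'X^3) in
  [/\ D`_(3*i) = p`_i, D`_(3*i+1) = q`_i & D`_(3*i+2) = r`_i].
Proof.
move=> D; rewrite /D !coefD !coefXM !coefXnM !coef_comp_poly_Xn //.
split.
- rewrite dvdn_mulr // mulKn //.
  case: i => [|i] /=; first by rewrite !addr0.
  have -> : (3 %| (3 * i.+1).-1)%N = false by apply/negbTE; lia.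
  have -> : (3 * i.+1 < 2)%N = false by lia.
  have -> : (3 %| (3 * i.+1 - 2))%N = false by apply/negbTE; lia.
  by rewrite !addr0.
- have -> : (3 %| 3 * i + 1)%N = false by apply/negbTE; lia.
  have -> : ((3 * i + 1).-1 = 3 * i)%N by lia.
  rewrite dvdn_mulr // mulKn //.
  have -> : (3 * i + 1 < 2)%N = (i == 0)%N by case: i => [|i] /=; lia.
  case: i => [|i] /=; first by rewrite !addr0 add0r.
  have -> : (3 %| (3 * i.+1 + 1 - 2))%N = false by apply/negbTE; lia.
  by rewrite !addr0 add0r.
- have -> : (3 %| 3 * i + 2)%N = false by apply/negbTE; lia.
  have -> : (3 %| (3 * i + 2).-1)%N = false by apply/negbTE; lia.
  have -> : (3 * i + 2 < 2)%N = false by lia.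
  by rewrite addnK dvdn_mulr // mulKn // !add0r if_same add0r.
Qed.


Lemma poch_S (C : numClosedFieldType) (a : C) n : poch a n.+1 = poch a n * (a + n%:R).
Proof. by rewrite /poch big_ord_recr. Qed.

Lemma poch0 (C : numClosedFieldType) (a : C) : poch a 0 = 1.
Proof. by rewrite /poch big_ord0. Qed.

Lemma poch_gt0 (C : numClosedFieldType) (a : C) n : 0 < a -> poch a n != 0.
Proof.
move=> a0; rewrite /poch gt_eqF //; apply: prodr_gt0 => i _.
by rewrite ltr_wpDr // ler0n.
Qed.

Lemma q_gt0 (C : numClosedFieldType) (a b : nat) : (0 < a)%N -> (0 < b)%N -> 0 < (a%:R / b%:R : C).
Proof. by move=> ha hb; rewrite divr_gt0 // ltr0n. Qed.

Lemma kq_gt0 (C : numClosedFieldType) (k a b : nat) : (0 < a)%N -> (0 < b)%N -> 0 < (k%:R + a%:R / b%:R : C).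
Proof. by move=> ha hb; rewrite ltr_wpDl ?ler0n // q_gt0. Qed.

Ltac nz := repeat (apply/andP; split); rewrite ?natr1 ?nat1r; repeat (apply: mulf_neq0); try assumption;
  try (apply: poch_gt0; by [apply: kq_gt0 | apply: q_gt0]);
  try (rewrite -?natrM -?natrD -?natrM -?natrD -?natrM -?natrD pnatr_eq0; lia).

Lemma solve_l (C : numClosedFieldType) (x y a b : C) : a != 0 -> x * a = y * b -> x = y * b / a.
Proof. by move=> na <-; rewrite mulfK. Qed.

Lemma binSk (C : numClosedFieldType) (n k : nat) :
  ('C(n.+1 + k + 1, n.+1))%:R = ('C(n+k+1,n))%:R * (n+k+2)%:R / (n.+1)%:R :> C.
Proof.
have h := mul_bin_diag (n + k + 2) n.
have -> : (n.+1 + k + 1 = n + k + 2)%N by lia.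
have e : ((n + k + 2).-1 = n + k + 1)%N by lia.
rewrite e in h.
apply: (mulIf (_ : (n.+1)%:R != 0 :> C)); first by nz.
rewrite mulfVK; last by nz.
by rewrite -!natrM mulnC -h mulnC.
Qed.

Lemma binKk (C : numClosedFieldType) (m k : nat) :
  ('C(m.+1 + k, m.+1))%:R = ('C(m.+1+k+1,m.+1))%:R * (k.+1)%:R / (m+k+2)%:R :> C.
Proof.
have h := mul_bin_down (m + k + 2) m.+1.
have e1 : ((m + k + 2).-1 = m.+1 + k)%N by lia.
have e2 : (m + k + 2 - m.+1 = k.+1)%N by lia.
have e3 : (m.+1 + k + 1 = m + k + 2)%N by lia.
rewrite e1 e2 in h; rewrite e3.
apply: (mulIf (_ : (m + k + 2)%:R != 0 :> C)); first by nz.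
rewrite mulfVK; last by nz.
by rewrite -!natrM mulnC h mulnC.
Qed.


Lemma num1 (C : numClosedFieldType) (k : nat) (beta : C) (U V W : nat -> C) :
  U 0%N = beta ->
  (forall n, V n * (3 * (n + k) + 4)%:R = U n * (3 * n + 2)%:R) ->
  (forall n, W n * (3 * (n + k) + 3)%:R = V n * (3 * n + 1)%:R) ->
  (forall n, U n * (3 * (n + k) + 5)%:R = W n.+1 * (3 * n + 3)%:R) ->
        (forall n, U n = poch (k%:R + 7/3) n * poch (k%:R + 5/3) n
                           / (poch (4/3) n * poch (5/3) n)
                           * ('C(n + k + 1, n))%:R * beta) /\
        (forall m, V m.+1 = poch (k%:R + 7/3) m * poch (k%:R + 5/3) m.+1
                           / (poch (4/3) m.+1 * poch (5/3) m)
                           * ('C(m.+1 + k + 1, m.+1))%:R * beta) /\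
        (forall m, W m.+1 = poch (k%:R + 7/3) m * poch (k%:R + 5/3) m.+1
                           / (poch (4/3) m * poch (5/3) m)
                           * ('C(m.+1 + k, m.+1))%:R * (beta / (k%:R + 1))) /\
        V 0%N = 2 * beta / (3 * (k%:R + 4/3)) /\
        W 0%N = 2 * beta / (9 * (k%:R + 1) * (k%:R + 4/3)).
Proof.
move=> h0 hV hW hU.
have eV n : V n = U n * (3 * n + 2)%:R / (3 * (n + k) + 4)%:R.
  by apply: solve_l; [nz | exact: hV].
have eW n : W n = V n * (3 * n + 1)%:R / (3 * (n + k) + 3)%:R.
  by apply: solve_l; [nz | exact: hW].
have fW n : W n.+1 = U n * (3 * (n + k) + 5)%:R / (3 * n + 3)%:R.
  by apply: solve_l; [nz | rewrite hU].
have fV n : V n = W n * (3 * (n + k) + 3)%:R / (3 * n + 1)%:R.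
  by apply: solve_l; [nz | rewrite hW].
have fU n : U n = V n * (3 * (n + k) + 4)%:R / (3 * n + 2)%:R.
  by apply: solve_l; [nz | rewrite hV].
have P1 n : poch (k%:R + 7/3 : C) n != 0 by apply: poch_gt0; apply: kq_gt0.
have P2 n : poch (k%:R + 5/3 : C) n != 0 by apply: poch_gt0; apply: kq_gt0.
have P3 n : poch (4/3 : C) n != 0 by apply: poch_gt0; apply: q_gt0.
have P4 n : poch (5/3 : C) n != 0 by apply: poch_gt0; apply: q_gt0.
have HU : forall n, U n = poch (k%:R + 7/3) n * poch (k%:R + 5/3) n
                           / (poch (4/3) n * poch (5/3) n)
                           * ('C(n + k + 1, n))%:R * beta.
  elim=> [|n IH]; first by rewrite !poch0 bin0 h0; field.
  rewrite fU fV fW IH !poch_S (binSk C n k).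
  field.
  all: nz.
split; first exact: HU.
split.
  move=> m; rewrite eV HU !poch_S; field; nz.
split.
  move=> m; rewrite eW eV HU (binKk C m k) !poch_S; field; nz.
split.
  rewrite eV HU !poch0 bin0; field; nz.
rewrite eW eV HU !poch0 bin0; field; nz.
Qed.

Lemma num2 (C : numClosedFieldType) (t : nat) (gamma : C) (G H K : nat -> C) :
  G 0%N = gamma ->
  (forall n, H n * (3 * (n + t) + 3)%:R = G n * (3 * n + 2)%:R) ->
  (forall n, K n * (3 * (n + t) + 2)%:R = H n * (3 * n + 1)%:R) ->
  (forall n, G n * (3 * (n + t) + 4)%:R = K n.+1 * (3 * n + 3)%:R) ->
        (forall n, G n = poch (t%:R + 5/3) n * poch (t%:R + 4/3) n
                           / (poch (4/3) n * poch (5/3) n)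
                           * ('C(n + t + 1, n))%:R * gamma) /\
        (forall m, H m.+1 = poch (t%:R + 5/3) m.+1 * poch (t%:R + 4/3) m.+1
                           / (poch (4/3) m.+1 * poch (5/3) m)
                           * ('C(m.+1 + t, m.+1))%:R * (gamma / (t%:R + 1))) /\
        (forall m, K m.+1 = poch (t%:R + 5/3) m * poch (t%:R + 4/3) m.+1
                           / (poch (4/3) m * poch (5/3) m)
                           * ('C(m.+1 + t, m.+1))%:R * (gamma / (t%:R + 1))) /\
        H 0%N = 2 * gamma / (3 * (t%:R + 1)) /\
        K 0%N = 2 * gamma / (9 * (t%:R + 1) * (t%:R + 2/3)).
Proof.
move=> h0 hH hK hG.
have eH n : H n = G n * (3 * n + 2)%:R / (3 * (n + t) + 3)%:R.
  by apply: solve_l; [nz | exact: hH].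
have eK n : K n = H n * (3 * n + 1)%:R / (3 * (n + t) + 2)%:R.
  by apply: solve_l; [nz | exact: hK].
have fK n : K n.+1 = G n * (3 * (n + t) + 4)%:R / (3 * n + 3)%:R.
  by apply: solve_l; [nz | rewrite hG].
have fH n : H n = K n * (3 * (n + t) + 2)%:R / (3 * n + 1)%:R.
  by apply: solve_l; [nz | rewrite hK].
have fG n : G n = H n * (3 * (n + t) + 3)%:R / (3 * n + 2)%:R.
  by apply: solve_l; [nz | rewrite hH].
have HG : forall n, G n = poch (t%:R + 5/3) n * poch (t%:R + 4/3) n
                           / (poch (4/3) n * poch (5/3) n)
                           * ('C(n + t + 1, n))%:R * gamma.
  elim=> [|n IH]; first by rewrite !poch0 bin0 h0; field.
  rewrite fG fH fK IH !poch_S (binSk C n t).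
  field.
  all: nz.
split; first exact: HG.
split.
  move=> m; rewrite eH HG (binKk C m t) !poch_S; field; nz.
split.
  move=> m; rewrite eK eH HG (binKk C m t) !poch_S; field; nz.
split.
  rewrite eH HG !poch0 bin0; field; nz.
rewrite eK eH HG !poch0 bin0; field; nz.
Qed.


Lemma size_exact (C : numClosedFieldType) (p : {poly C}) n :
  p`_n != 0 -> (forall i, (n < i)%N -> p`_i = 0) -> size p = n.+1.
Proof.
move=> h1 h2; apply/eqP; rewrite eqn_leq; apply/andP; split.
  by apply/leq_sizeP => j hj; apply: h2.
rewrite ltnNge; apply/negP => /leq_sizeP h; move: h1; by rewrite h // eqxx.
Qed.

Lemma eq0_coef (C : numClosedFieldType) (p : {poly C}) : (forall i, p`_i = 0) -> p = 0.
Proof. by move=> h; apply/polyP => i; rewrite h coef0. Qed.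

Lemma rel_eq0 (C : numClosedFieldType) (x y a b : C) : a != 0 -> b != 0 ->
  x * a = y * b -> (x == 0) = (y == 0).
Proof.
move=> ha hb h; have := congr1 (fun z => z == 0) h.
by rewrite /= !mulf_eq0 (negbTE ha) (negbTE hb) !orbF.
Qed.

Lemma chain (C : numClosedFieldType) (u v w : nat -> {poly C})
  (p1 q1 p2 q2 p3 q3 : nat -> nat -> C) :
  (forall n i, p1 n i != 0 /\ q1 n i != 0 /\ p2 n i != 0 /\ q2 n i != 0 /\ p3 n i != 0 /\ q3 n i != 0) ->
  (forall n i, (v n)`_i * p1 n i = (u n)`_i * q1 n i) ->
  (forall n i, (w n)`_i * p2 n i = (v n)`_i * q2 n i) ->
  (forall n i, (u n)`_i * p3 n i = (w n.+1)`_i.+1 * q3 n i) ->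
  (size (u 0%N) <= 1)%N ->
  (forall n, u n = 0 /\ v n = 0 /\ w n = 0) \/
  exists k, forall n, [/\ size (u (n + k)%N) = n.+1, size (v (n + k)%N) = n.+1
                       & size (w (n + k)%N) = n.+1].
Proof.
move=> hnz Hvu Hwv Huw hu0.
have Evu n i : ((v n)`_i == 0) = ((u n)`_i == 0).
  by have [? [? [? [? [? ?]]]]] := hnz n i; apply: rel_eq0 (Hvu n i).
have Ewu n i : ((w n)`_i == 0) = ((u n)`_i == 0).
  by have [? [? [? [? [? ?]]]]] := hnz n i; rewrite -(Evu n i); apply: rel_eq0 (Hwv n i).
have Euw n i : ((u n)`_i == 0) = ((u n.+1)`_i.+1 == 0).
  by have [? [? [? [? [? ?]]]]] := hnz n i; rewrite -(Ewu n.+1 i.+1); apply: rel_eq0 (Huw n i).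
have Z n i : (u n)`_i = 0 -> (v n)`_i = 0 /\ (w n)`_i = 0.
  by move=> h; split; apply/eqP; rewrite ?Evu ?Ewu h.
case: (classic (exists n, u n != 0)) => [ex|nex]; last first.
  left => n.
  have e : u n = 0.
    by case: (eqVneq (u n) 0) => [e|ne]; last by case: nex; exists n.
  split; first done.
  by split; apply: eq0_coef => i; have [] := Z n i; rewrite ?e ?coef0.
right.
case: (ex_minnP ex) => k hk hmin.
exists k.
have S n : (u (n+k)%N)`_n != 0 /\ forall i, (n < i)%N -> (u (n+k)%N)`_i = 0.
  elim: n => [|n [IH1 IH2]].
    have hi : forall i, (0 < i)%N -> (u k)`_i = 0.
      move=> [|j] // _.
      case: k hk hmin => [|m] hk hmin.
        by move/leq_sizeP: hu0 => h; apply: h.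
      have e : u m = 0.
        by case: (eqVneq (u m) 0) => [e|ne]; last by have := hmin _ ne; rewrite ltnn.
      by apply/eqP; rewrite -Euw e coef0.
    rewrite add0n; split; last exact: hi.
    apply/negP => /eqP h0; move: hk; rewrite (@eq0_coef _ (u k)) ?eqxx //.
    by move=> [|i]; [done | apply: hi].
  rewrite addSn; split.
    by rewrite -Euw.
  by move=> [|i] // hi; apply/eqP; rewrite -Euw; apply/eqP; apply: IH2.
move=> n; have [h1 h2] := S n; split.
- by apply: size_exact.
- apply: size_exact; first by rewrite Evu.
  by move=> i hi; have [] := Z _ _ (h2 i hi).
- apply: size_exact; first by rewrite Ewu.
  by move=> i hi; have [] := Z _ _ (h2 i hi).
Qed.


Lemma hatMPS (C : numClosedFieldType) (p : nat -> {poly C}) :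
  (forall n, size (p n) = n.+1) -> MPS (fun n => ((p n)`_n)^-1 *: p n).
Proof.
move=> hs n.
have nz : (p n)`_n != 0.
  have : lead_coef (p n) != 0 by rewrite lead_coef_eq0 -size_poly_eq0 hs.
  by rewrite lead_coefE hs.
split; last by rewrite size_scale ?invr_eq0 ?hs.
by rewrite monicE lead_coefZ lead_coefE hs /= mulVf.
Qed.

Lemma hatK (C : numClosedFieldType) (p : {poly C}) n :
  size p = n.+1 -> p = (p`_n) *: ((p`_n)^-1 *: p).
Proof.
move=> hs.
have nz : p`_n != 0.
  have : lead_coef p != 0 by rewrite lead_coef_eq0 -size_poly_eq0 hs.
  by rewrite lead_coefE hs.
by rewrite scalerA divff // scale1r.
Qed.

Lemma appell_coef (C : numClosedFieldType) (W : nat -> {poly C}) :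
  Appell W -> forall N M k l, M = N.+1 -> l = k.+1 ->
  (W M)`_l * l%:R = M%:R * (W N)`_k.
Proof.
move=> [_ hd] N M k l -> ->.
have := congr1 (fun p : {poly C} => p`_k) (hd N).
by rewrite /= coef_deriv coefZ mulr_natr.
Qed.


Theorem theorem2 (C : numClosedFieldType)
  (W P Q R a1 a2 b1 b2 c1 c2 : nat -> {poly C}) :
  Appell W ->
  cubic_decomposition W P Q R a1 a2 b1 b2 c1 c2 ->
  (* (1) and (3) for kappa *)
  ((forall n, a1 n = 0 /\ c1 n = 0 /\ b2 n = 0) \/
   ((exists n, a1 n != 0) /\ (exists n, c1 n != 0) /\ (exists n, b2 n != 0) /\
    exists (k : nat) (mu1 mu2 mu3 : nat -> C) (ha1 hc1 hb2 : nat -> {poly C}),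
      [/\ MPS ha1, MPS hc1, MPS hb2,
          (forall n, b2 (n + k)%N = mu1 n *: hb2 n
                  /\ a1 (n + k)%N = mu2 n *: ha1 n
                  /\ c1 (n + k)%N = mu3 n *: hc1 n) &
      exists beta : C, beta != 0 /\ b2 k = beta%:P /\
        (forall n, mu1 n = poch (k%:R + 7/3) n * poch (k%:R + 5/3) n
                           / (poch (4/3) n * poch (5/3) n)
                           * ('C(n + k + 1, n))%:R * beta) /\
        (forall m, mu2 m.+1 = poch (k%:R + 7/3) m * poch (k%:R + 5/3) m.+1
                           / (poch (4/3) m.+1 * poch (5/3) m)
                           * ('C(m.+1 + k + 1, m.+1))%:R * beta) /\
        (forall m, mu3 m.+1 = poch (k%:R + 7/3) m * poch (k%:R + 5/3) m.+1
                           / (poch (4/3) m * poch (5/3) m)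
                           * ('C(m.+1 + k, m.+1))%:R * (beta / (k%:R + 1))) /\
        mu2 0%N = 2 * beta / (3 * (k%:R + 4/3)) /\
        mu3 0%N = 2 * beta / (9 * (k%:R + 1) * (k%:R + 4/3))])) /\
  (* (2) and (3) for tau *)
  ((forall n, a2 n = 0 /\ c2 n = 0 /\ b1 n = 0) \/
   ((exists n, a2 n != 0) /\ (exists n, c2 n != 0) /\ (exists n, b1 n != 0) /\
    exists (t : nat) (al1 al2 al3 : nat -> C) (ha2 hc2 hb1 : nat -> {poly C}),
      [/\ MPS ha2, MPS hc2, MPS hb1,
          (forall n, a2 (n + t)%N = al1 n *: ha2 n
                  /\ c2 (n + t)%N = al2 n *: hc2 n
                  /\ b1 (n + t)%N = al3 n *: hb1 n) &
      exists gamma : C, gamma != 0 /\ a2 t = gamma%:P /\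
        (forall n, al1 n = poch (t%:R + 5/3) n * poch (t%:R + 4/3) n
                           / (poch (4/3) n * poch (5/3) n)
                           * ('C(n + t + 1, n))%:R * gamma) /\
        (forall m, al2 m.+1 = poch (t%:R + 5/3) m.+1 * poch (t%:R + 4/3) m.+1
                           / (poch (4/3) m.+1 * poch (5/3) m)
                           * ('C(m.+1 + t, m.+1))%:R * (gamma / (t%:R + 1))) /\
        (forall m, al3 m.+1 = poch (t%:R + 5/3) m * poch (t%:R + 4/3) m.+1
                           / (poch (4/3) m * poch (5/3) m)
                           * ('C(m.+1 + t, m.+1))%:R * (gamma / (t%:R + 1))) /\
        al2 0%N = 2 * gamma / (3 * (t%:R + 1)) /\
        al3 0%N = 2 * gamma / (9 * (t%:R + 1) * (t%:R + 2/3))])).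
Proof.
move=> hA [hP [hQ [hR [hs1 [hs2 [h0 [h1 h2]]]]]]].
have AC := @appell_coef C W hA.
have cA1 n i : (W (3*n+3)%N)`_(3*i+1) = (a1 n)`_i.
  have -> : (3*n+3 = 3*n.+1)%N by lia.
  by rewrite h0; have [_ e _] := dec_coef _ (P n.+1) (prevp a1 n.+1) (prevp a2 n.+1) i.
have cA2 n i : (W (3*n+3)%N)`_(3*i+2) = (a2 n)`_i.
  have -> : (3*n+3 = 3*n.+1)%N by lia.
  by rewrite h0; have [_ _ e] := dec_coef _ (P n.+1) (prevp a1 n.+1) (prevp a2 n.+1) i.
have cB1 n i : (W (3*n+1)%N)`_(3*i) = (b1 n)`_i.
  by rewrite h1; have [e _ _] := dec_coef _ (b1 n) (Q n) (prevp b2 n) i.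
have cB1' n i : (W (3*n+4)%N)`_(3*i+3) = (b1 n.+1)`_i.+1.
  have -> : (3*n+4 = 3*n.+1+1)%N by lia.
  have -> : (3*i+3 = 3*i.+1)%N by lia.
  by rewrite h1; have [e _ _] := dec_coef _ (b1 n.+1) (Q n.+1) (prevp b2 n.+1) i.+1.
have cB2 n i : (W (3*n+4)%N)`_(3*i+2) = (b2 n)`_i.
  have -> : (3*n+4 = 3*n.+1+1)%N by lia.
  by rewrite h1; have [_ _ e] := dec_coef _ (b1 n.+1) (Q n.+1) (prevp b2 n.+1) i.
have cC1 n i : (W (3*n+2)%N)`_(3*i) = (c1 n)`_i.
  by rewrite h2; have [e _ _] := dec_coef _ (c1 n) (c2 n) (R n) i.
have cC1' n i : (W (3*n+5)%N)`_(3*i+3) = (c1 n.+1)`_i.+1.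
  have -> : (3*n+5 = 3*n.+1+2)%N by lia.
  have -> : (3*i+3 = 3*i.+1)%N by lia.
  by rewrite h2; have [e _ _] := dec_coef _ (c1 n.+1) (c2 n.+1) (R n.+1) i.+1.
have cC2 n i : (W (3*n+2)%N)`_(3*i+1) = (c2 n)`_i.
  by rewrite h2; have [_ e _] := dec_coef _ (c1 n) (c2 n) (R n) i.
have nz0 (p : {poly C}) n : size p = n.+1 -> p != 0.
  by move=> hs; apply/eqP => e; rewrite e size_poly0 in hs.
have lc0 (p : {poly C}) : size p = 1%N -> p`_0 != 0.
  move=> hs; have : lead_coef p != 0 by rewrite lead_coef_eq0 -size_poly_eq0 hs.
  by rewrite lead_coefE hs.
have G1vu n i : (a1 n)`_i * (3*n+4)%:R = (b2 n)`_i * (3*i+2)%:R.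
  rewrite -cA1 -cB2 (AC (3*n+3) (3*n+4) (3*i+1) (3*i+2)); [exact: mulrC|lia|lia].
have G1wv n i : (c1 n)`_i * (3*n+3)%:R = (a1 n)`_i * (3*i+1)%:R.
  rewrite -cC1 -cA1 (AC (3*n+2) (3*n+3) (3*i) (3*i+1)); [exact: mulrC|lia|lia].
have G1uw n i : (b2 n)`_i * (3*n+5)%:R = (c1 n.+1)`_i.+1 * (3*i+3)%:R.
  rewrite -cB2 -cC1' (AC (3*n+4) (3*n+5) (3*i+2) (3*i+3)); [exact: mulrC|lia|lia].
have G2vu n i : (c2 n)`_i * (3*n+3)%:R = (a2 n)`_i * (3*i+2)%:R.
  rewrite -cC2 -cA2 (AC (3*n+2) (3*n+3) (3*i+1) (3*i+2)); [exact: mulrC|lia|lia].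
have G2wv n i : (b1 n)`_i * (3*n+2)%:R = (c2 n)`_i * (3*i+1)%:R.
  rewrite -cB1 -cC2 (AC (3*n+1) (3*n+2) (3*i) (3*i+1)); [exact: mulrC|lia|lia].
have G2uw n i : (a2 n)`_i * (3*n+4)%:R = (b1 n.+1)`_i.+1 * (3*i+3)%:R.
  rewrite -cA2 -cB1' (AC (3*n+3) (3*n+4) (3*i+2) (3*i+3)); [exact: mulrC|lia|lia].
split.
- have hsz : (size (b2 0%N) <= 1)%N by case: (hs1 0%N) => _ [_ h].
  have hnz : forall n i : nat, (3*n+4)%:R != 0 :> C /\ (3*i+2)%:R != 0 :> C /\
     (3*n+3)%:R != 0 :> C /\ (3*i+1)%:R != 0 :> C /\ (3*n+5)%:R != 0 :> C /\ (3*i+3)%:R != 0 :> C.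
    by move=> n i; repeat split; rewrite pnatr_eq0; lia.
  have [Z1|[k Hk]] := chain _ b2 a1 c1 (fun n i => (3*n+4)%:R) (fun n i => (3*i+2)%:R)
     (fun n i => (3*n+3)%:R) (fun n i => (3*i+1)%:R) (fun n i => (3*n+5)%:R)
     (fun n i => (3*i+3)%:R) hnz G1vu G1wv G1uw hsz.
  + by left => n; have [? [? ?]] := Z1 n.
  + right.
    have [s1 s2 s3] := Hk 0%N; rewrite add0n in s1 s2 s3.
    split; first by exists k; apply: nz0 s2.
    split; first by exists k; apply: nz0 s3.
    split; first by exists k; apply: nz0 s1.
    exists k, (fun n => (b2 (n+k)%N)`_n), (fun n => (a1 (n+k)%N)`_n), (fun n => (c1 (n+k)%N)`_n).
    exists (fun n => ((a1 (n+k)%N)`_n)^-1 *: a1 (n+k)%N),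
           (fun n => ((c1 (n+k)%N)`_n)^-1 *: c1 (n+k)%N),
           (fun n => ((b2 (n+k)%N)`_n)^-1 *: b2 (n+k)%N).
    split.
    * by apply: (hatMPS _ (fun n => a1 (n+k)%N)) => n; have [] := Hk n.
    * by apply: (hatMPS _ (fun n => c1 (n+k)%N)) => n; have [] := Hk n.
    * by apply: (hatMPS _ (fun n => b2 (n+k)%N)) => n; have [] := Hk n.
    * by move=> n; have [e1 e2 e3] := Hk n; split; [|split]; apply: hatK.
    * exists ((b2 k)`_0); split; first exact: lc0.
      split; first by apply: size1_polyC; rewrite s1.
      have := num1 C k ((b2 k)`_0) (fun n => (b2 (n+k)%N)`_n) (fun n => (a1 (n+k)%N)`_n)
        (fun n => (c1 (n+k)%N)`_n) _ _ _ _.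
      apply.
      -- by rewrite /= add0n.
      -- by move=> n; apply: G1vu.
      -- by move=> n; apply: G1wv.
      -- by move=> n /=; rewrite addSn; apply: G1uw.
- have hsz : (size (a2 0%N) <= 1)%N by case: (hs1 0%N) => _ [h _].
  have hnz : forall n i : nat, (3*n+3)%:R != 0 :> C /\ (3*i+2)%:R != 0 :> C /\
     (3*n+2)%:R != 0 :> C /\ (3*i+1)%:R != 0 :> C /\ (3*n+4)%:R != 0 :> C /\ (3*i+3)%:R != 0 :> C.
    by move=> n i; repeat split; rewrite pnatr_eq0; lia.
  have [Z1|[k Hk]] := chain _ a2 c2 b1 (fun n i => (3*n+3)%:R) (fun n i => (3*i+2)%:R)
     (fun n i => (3*n+2)%:R) (fun n i => (3*i+1)%:R) (fun n i => (3*n+4)%:R)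
     (fun n i => (3*i+3)%:R) hnz G2vu G2wv G2uw hsz.
  + by left => n; have [? [? ?]] := Z1 n.
  + right.
    have [s1 s2 s3] := Hk 0%N; rewrite add0n in s1 s2 s3.
    split; first by exists k; apply: nz0 s1.
    split; first by exists k; apply: nz0 s2.
    split; first by exists k; apply: nz0 s3.
    exists k, (fun n => (a2 (n+k)%N)`_n), (fun n => (c2 (n+k)%N)`_n), (fun n => (b1 (n+k)%N)`_n).
    exists (fun n => ((a2 (n+k)%N)`_n)^-1 *: a2 (n+k)%N),
           (fun n => ((c2 (n+k)%N)`_n)^-1 *: c2 (n+k)%N),
           (fun n => ((b1 (n+k)%N)`_n)^-1 *: b1 (n+k)%N).
    split.
    * by apply: (hatMPS _ (fun n => a2 (n+k)%N)) => n; have [] := Hk n.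
    * by apply: (hatMPS _ (fun n => c2 (n+k)%N)) => n; have [] := Hk n.
    * by apply: (hatMPS _ (fun n => b1 (n+k)%N)) => n; have [] := Hk n.
    * by move=> n; have [e1 e2 e3] := Hk n; split; [|split]; apply: hatK.
    * exists ((a2 k)`_0); split; first exact: lc0.
      split; first by apply: size1_polyC; rewrite s1.
      have := num2 C k ((a2 k)`_0) (fun n => (a2 (n+k)%N)`_n) (fun n => (c2 (n+k)%N)`_n)
        (fun n => (b1 (n+k)%N)`_n) _ _ _ _.
      apply.
      -- by rewrite /= add0n.
      -- by move=> n; apply: G2vu.
      -- by move=> n; apply: G2wv.
      -- by move=> n /=; rewrite addSn; apply: G2uw.
Qed.
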